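(* Let $k$ be a field of characteristic zero and $D_2 = k_{+}\{x\}/[x^2]$. Every element of the algebra $D_2[\partial]$ of differential operators over $D_2$ is nilpotent.
   Context: $k\{x\}$ denotes the differential polynomial algebra in one indeterminate: the polynomial algebra $k[x_0,x_1,x_2,\dots]$ (with $x = x_0$) with the $k$-linear derivation satisfying $x_n' = x_{n+1}$. $k_{+}\{x\}$ is its subalgebra (without unity) of differential polynomials with zero constant term; $[x^2]$ is the differential ideal (ideal closed under the derivation) of $k_{+}\{x\}$ generated by $x^2$, and $D_2$ carries the induced derivation $a\mapsto a'$. For a differential algebra $A$, the algebra $A[\partial]$ consists of finite sums $a_n\partial^n+\cdots+a_1\partial+a_0$ with $a_i\in A$, with multiplication determined by associativity and the rule $\partial a = a\partial + a'$ (so $(a\partial^i)(b\partial^j) = \sum_{l=0}^{i}\binom{i}{l} a\, b^{(l)}\partial^{i+j-l}$). *)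

(* Defs.v *)
From HB Require Import structures.
From mathcomp Require Import all_boot all_order all_algebra.
From mathcomp Require Import finmap.
From mathcomp Require Import monalg.
Set Implicit Arguments. Unset Strict Implicit. Unset Printing Implicit Defensive.
Import GRing.Theory.
Local Open Scope ring_scope.

Section DiffPoly.
Variable k : fieldType.

(* k{x} = k[x_0, x_1, x_2, ...]: the monoid algebra over k of the commutative
   monomials in countably many variables indexed by nat. *)
Definition kx := {malg k[cmonom nat]}.

Definition xvar (n : nat) : kx := << ucm n >>.
Definition xx : kx := xvar 0.

(* The derivation x_n' = x_{n+1}, extended k-linearly and by the Leibniz rule:
   on a monomial m = prod_i x_i^(m i), m' = sum_i (m i) x^(m - e_i + e_(i+1)). *)
Definition der_monom (m : cmonom nat) : kx :=
  \sum_(i <- finsupp (cmonom_val m))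
     ((cmonom_val m i)%:R *: << mulcm (divcm m (ucm i)) (ucm i.+1) >>).

Definition der (p : kx) : kx :=
  \sum_(m <- msupp p) (p@_m *: der_monom m).

Definition kplus (p : kx) : Prop := p@_(@onecm nat) = 0.

Inductive dideal_x2 : kx -> Prop :=
  | dI_gen : dideal_x2 (xx ^+ 2)
  | dI_add p q : dideal_x2 p -> dideal_x2 q -> dideal_x2 (p + q)
  | dI_scale (c : k) p : dideal_x2 p -> dideal_x2 (c *: p)
  | dI_mul a p : kplus a -> dideal_x2 p -> dideal_x2 (a * p)
  | dI_der p : dideal_x2 p -> dideal_x2 (der p).

(* An element of D_2 = k_+{x}/[x^2] is represented by some p in k_+{x};
   two representatives p, q denote the same element of D_2 iff p - q \in [x^2].
   An element a_n d^n + ... + a_0 of D_2[d] is represented by the sequence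
   [:: a_0; ...; a_n] of representatives in k_+{x}. *)
Definition op_rep (P : seq kx) : Prop := forall i, kplus (nth 0 P i).

(* Multiplication in D_2[d], computed on representatives (the derivation of
   D_2 is induced by der):
   (a d^i)(b d^j) = sum_(l <= i) 'C(i,l) a b^(l) d^(i+j-l). *)
Definition opmul_coef (P Q : seq kx) (n : nat) : kx :=
  \sum_(i < size P) \sum_(j < size Q) \sum_(l < i.+1 | (i + j - l)%N == n)
     ('C(i, l)%:R * nth 0 P i * iter l der (nth 0 Q j)).

Definition opmul (P Q : seq kx) : seq kx :=
  mkseq (opmul_coef P Q) (size P + size Q).

(* P^(n+1) in the (non-unital) algebra D_2[d] *)
Fixpoint oppowS (P : seq kx) (n : nat) : seq kx :=
  match n with
  | 0 => P
  | n'.+1 => opmul P (oppowS P n')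
  end.

Definition op_zero (P : seq kx) : Prop := forall i, dideal_x2 (nth 0 P i).

End DiffPoly.

(* Main.v *)
Require Import Defs.
From HB Require Import structures.
From mathcomp Require Import all_boot all_order all_algebra.
From mathcomp Require Import finmap.
From mathcomp Require Import monalg.
From mathcomp Require Import zify.
Set Implicit Arguments. Unset Strict Implicit. Unset Printing Implicit Defensive.
Import GRing.Theory.
Local Open Scope ring_scope.
Local Open Scope fset_scope.

Section Mon.
Implicit Types (m : cmonom nat) (f g : nat -> nat).

Definition FF f m := (\sum_(i <- finsupp m) f i * m i)%N.

Lemma FFEw f m (d : {fset nat}) : finsupp m `<=` d ->
  FF f m = (\sum_(i <- d) f i * m i)%N.
Proof.
move=> le; rewrite /FF (big_fset_incl _ le) //.
by move=> i _; rewrite -cmE_neq0 negbK => /eqP ->; rewrite muln0.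
Qed.

Lemma FFM f m1 m2 : FF f (mulcm m1 m2) = (FF f m1 + FF f m2)%N.
Proof.
rewrite {1}/FF (@mdomD _ m1 m2).
rewrite (FFEw f (fsubsetUl _ (finsupp m2))) (FFEw f (fsubsetUr (finsupp m1) _)).
by rewrite -big_split /=; apply/eq_bigr=> /= i _; rewrite mulcmE mulnDr.
Qed.

Lemma FFU f i : FF f (ucm i) = f i.
Proof. by rewrite /FF (@mdomU _ i) big_seq_fset1 ucmE eqxx muln1. Qed.

Lemma FF1 f : FF f (@onecm nat) = 0%N.
Proof. by rewrite /FF (@mdom1 nat) big_seq_fset0. Qed.

Lemma FF_le f g m : (forall i, f i <= g i)%N -> (FF f m <= FF g m)%N.
Proof. by move=> h; apply: leq_sum => i _; rewrite leq_mul2r h orbT. Qed.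

Lemma FFD f g m : FF (fun i => f i + g i)%N m = (FF f m + FF g m)%N.
Proof. by rewrite /FF -big_split; apply/eq_bigr => i _; rewrite mulnDl. Qed.

Lemma FFZ c f m : FF (fun i => c * f i)%N m = (c * FF f m)%N.
Proof. by rewrite /FF big_distrr; apply/eq_bigr => i _ /=; rewrite mulnA. Qed.

Lemma FF_deg m : FF (fun _ => 1%N) m = mdeg m.
Proof. by rewrite /FF mdegE; apply/eq_bigr => i _; rewrite mul1n. Qed.

Lemma FF_ge f m i : (f i * m i <= FF f m)%N.
Proof.
case: (boolP (i \in finsupp m)) => hi.
  by rewrite /FF (big_fsetD1 i hi) /= leq_addr.
by move: hi; rewrite -cmE_eq0 => /eqP ->; rewrite muln0.
Qed.

Fixpoint pw (n t : nat) : cmonom nat :=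
  if t is t'.+1 then mulcm (ucm n) (pw n t') else @onecm nat.

Lemma pwE (n t i : nat) : pw n t i = (t * (n == i))%N.
Proof.
elim: t => [|t IH] /=; first by rewrite onecmE.
by rewrite mulcmE ucmE IH mulSn.
Qed.

Lemma FF_pw f (n t : nat) : FF f (pw n t) = (t * f n)%N.
Proof.
elim: t => [|t IH] /=; first by rewrite FF1.
by rewrite FFM FFU IH mulSn.
Qed.

Lemma decomp (n t : nat) m : (t <= m n)%N -> m = mulcm (pw n t) (divcm m (pw n t)).
Proof.
move=> h; apply/eqP/cmP => i; rewrite mulcmE divcmE pwE.
case: (eqVneq n i) => [<-|]; last by rewrite muln0 add0n subn0.
by rewrite muln1 subnKC.
Qed.

Lemma FF_ind (n : nat) m : FF (fun i => nat_of_bool (i == n)) m = m n.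
Proof.
case: (boolP (n \in finsupp m)) => hn.
  rewrite /FF (big_fsetD1 n hn) /= eqxx mul1n big1_fset ?addn0 //.
  by move=> i; rewrite in_fsetD1 => /andP [/negbTE -> _] _.
rewrite /FF big1_fset; last first.
  move=> i hi _; have /negbTE -> : i != n by apply: contraNneq hn => <-.
  by rewrite mul0n.
by move: hn; rewrite -cmE_eq0 => /eqP ->.
Qed.

Definition cnt (B : nat) m := FF (fun i => nat_of_bool (i <= B)%N) m.

Lemma cnt0 m : cnt 0 m = m 0%N.
Proof.
rewrite /cnt -FF_ind; apply: eq_bigr => i _; by rewrite leqn0.
Qed.

Lemma cntS (B : nat) m : cnt B.+1 m = (cnt B m + m B.+1)%N.
Proof.
rewrite /cnt -FF_ind -FFD; apply: eq_bigr => i _; congr (_ * _)%N.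
case: (eqVneq i B.+1) => [->|ne]; first by rewrite ltnn ltnSn.
by rewrite [in LHS]leq_eqVlt ltnS (negbTE ne) addn0.
Qed.

End Mon.

Opaque ucm mulcm divcm onecm.
Section Der.
Local Open Scope ring_scope.
Variable k : fieldType.
Local Notation kx := (kx k).
Implicit Types (p q : kx) (m : cmonom nat).

Lemma malgUM m1 m2 : (<< m1 >> : kx) * << m2 >> = << mulcm m1 m2 >>.
Proof. by rewrite malgM_def fgmulUU mulr1. Qed.

Lemma malgUZ (c : k) m : << c *g m >> = c *: (<< m >> : kx).
Proof. by rewrite -mul_malgC malgM_def fgmulUU mulr1 Monoid.mul1m. Qed.

Lemma derEw p (d : {fset cmonom nat}) : msupp p `<=` d ->
  der p = \sum_(m <- d) (p@_m *: der_monom k m).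
Proof.
move=> le; rewrite /der (big_fset_incl _ le) //.
by move=> m _ /mcoeff_outdom ->; rewrite scale0r.
Qed.

Lemma derD p q : der (p + q) = der p + der q.
Proof.
rewrite (@derEw (p + q) (msupp p `|` msupp q)) ?msuppD_le //.
rewrite (@derEw p (msupp p `|` msupp q)) ?fsubsetUl //.
rewrite (@derEw q (msupp p `|` msupp q)) ?fsubsetUr //.
by rewrite -big_split /=; apply/eq_bigr => m _; rewrite mcoeffD scalerDl.
Qed.

Lemma derZ (c : k) p : der (c *: p) = c *: der p.
Proof.
rewrite (@derEw (c *: p) (msupp p)) ?msuppZ_le // /der scaler_sumr.
by apply/eq_bigr => m _; rewrite mcoeffZ scalerA.
Qed.

Lemma der0 : der (0 : kx) = 0.
Proof. by rewrite /der msupp0 big_seq_fset0. Qed.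

Lemma derN p : der (- p) = - der p.
Proof. by rewrite -scaleN1r derZ scaleN1r. Qed.

Lemma der_sum (I : Type) (r : seq I) (F : I -> kx) :
  der (\sum_(i <- r) F i) = \sum_(i <- r) der (F i).
Proof.
elim: r => [|a r IH]; first by rewrite !big_nil der0.
by rewrite !big_cons derD IH.
Qed.

Lemma derU m : der (<< m >> : kx) = der_monom k m.
Proof. by rewrite /der msuppU1 big_seq_fset1 mcoeffUU scale1r. Qed.

Lemma der_monomEw m (d : {fset nat}) : finsupp m `<=` d ->
  der_monom k m = \sum_(i <- d)
     ((m i)%:R *: << mulcm (divcm m (ucm i)) (ucm i.+1) >>).
Proof.
move=> le; rewrite /der_monom (big_fset_incl _ le) //.
by move=> i _; rewrite -cmE_neq0 negbK => /eqP ->; rewrite scale0r.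
Qed.

Lemma der_monom1 : der_monom k (@onecm nat) = 0.
Proof. by rewrite /der_monom (@mdom1 nat) big_seq_fset0. Qed.

Lemma auxD (a b : nat) (X Z : kx) : b%:R *: X = Z -> a%:R *: X + b%:R *: X = a%:R *: X + Z.
Proof. by move->. Qed.

Lemma auxZ (a : nat) (X Y U : kx) : ((0 < a)%N -> X = U * Y) -> a%:R *: X = U * (a%:R *: Y).
Proof. by case: a => [|a] h; [rewrite !scale0r mulr0 | rewrite h // scalerAr]. Qed.

Lemma der_monomU j m : der_monom k (mulcm (ucm j) m) =
  << mulcm m (ucm j.+1) >> + << ucm j >> * der_monom k m.
Proof.
set d := j |` finsupp m.
have le1 : finsupp (mulcm (ucm j) m) `<=` d.
  Timeout 15 by rewrite (@mdomD _ (ucm j) m) (@mdomU _ j).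
have le2 : finsupp m `<=` d by rewrite fsubsetU1.
Timeout 15 rewrite (der_monomEw le1) (der_monomEw le2) mulr_sumr.
have jd : j \in d by rewrite fset1U1.
pose T i : kx := << mulcm (divcm (mulcm (ucm j) m) (ucm i)) (ucm i.+1) >>.
pose S i : kx := << mulcm (divcm m (ucm i)) (ucm i.+1) >>.
Timeout 20 rewrite (eq_bigr (fun i => (j == i)%:R *: T i + << ucm j >> * ((m i)%:R *: S i))); last first.
  Timeout 15 move=> i _.
  Timeout 10 rewrite mulcmE ucmE natrD scalerDl.
  Timeout 15 apply: auxD.
  Timeout 15 apply: auxZ => mi.
  Timeout 10 rewrite /S malgUM /T.
  have E : mulcm (divcm (mulcm (ucm j) m) (ucm i)) (ucm i.+1) =
     mulcm (ucm j) (mulcm (divcm m (ucm i)) (ucm i.+1)).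
    Timeout 15 apply/eqP/cmP => l; rewrite !mulcmE !divcmE !mulcmE !ucmE.
    Timeout 15 case: (eqVneq i l) => [<-|_]; last by rewrite !subn0 addnA.
    Timeout 15 lia.
  Timeout 15 by rewrite E.
Timeout 10 rewrite big_split /=.
Timeout 15 congr (_ + _).
Timeout 10 rewrite (big_fsetD1 j jd) /= eqxx scale1r big1_fset ?addr0; last first.
  Timeout 15 by move=> i; rewrite in_fsetD1 => /andP [ij _] _; rewrite eq_sym (negbTE ij) scale0r.
Timeout 15 rewrite /T; congr << _ >>; apply/eqP/cmP => l; rewrite !mulcmE !divcmE !mulcmE.
Timeout 15 by rewrite addKn.
Qed.

Lemma der_monomU1 (a : nat) : der_monom k (ucm a) = << ucm a.+1 >>.
Proof.
have -> : ucm a = mulcm (ucm a) (@onecm nat) by rewrite mulcm0.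
by rewrite der_monomU der_monom1 mulr0 addr0 mul0cm.
Qed.

Local Notation Xn a := (<< ucm a >> : kx).

Lemma derXX (a b : nat) : der (Xn a * Xn b) = Xn a.+1 * Xn b + Xn a * Xn b.+1.
Proof.
rewrite [in LHS]malgUM derU der_monomU der_monomU1 [X in _ + X = _]malgUM.
rewrite [X in _ = X + _]malgUM [X in _ = _ + X]malgUM.
by rewrite [mulcm (ucm b) _]mulcmC.
Qed.

Lemma iter_derD n p q : iter n (@der k) (p + q) = iter n (@der k) p + iter n (@der k) q.
Proof. elim: n => [|n IHn]; first reflexivity. erewrite !iterS, IHn, derD; reflexivity. Qed.

Lemma iter_derZ n (c : k) p : iter n (@der k) (c *: p) = c *: iter n (@der k) p.
Proof. elim: n => [|n IHn]; first reflexivity. erewrite !iterS, IHn, derZ; reflexivity. Qed.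

Lemma iter_der0 n : iter n (@der k) (0 : kx) = 0.
Proof. elim: n => [|n IHn]; first reflexivity. erewrite iterS, IHn, der0; reflexivity. Qed.

Lemma iter_der_sum n (I : Type) (r : seq I) (F : I -> kx) :
  iter n (@der k) (\sum_(i <- r) F i) = \sum_(i <- r) iter n (@der k) (F i).
Proof.
elim: r => [|a r IH]; first by rewrite !big_nil iter_der0.
by rewrite !big_cons iter_derD IH.
Qed.

Lemma bump0n (i : nat) : bump 0 i = i.+1. Proof. by []. Qed.

Lemma pascal (V : zmodType) N (F : nat -> V) :
  \sum_(j < N.+2) F j *+ 'C(N.+1, j) =
  \sum_(j < N.+1) F j.+1 *+ 'C(N, j) + \sum_(j < N.+1) F j *+ 'C(N, j).
Proof.
rewrite big_ord_recl /= bin0 mulr1n.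
under eq_bigr => i _ do rewrite bump0n binS mulrnDr.
rewrite big_split /=.
have h1 : \sum_(i < N.+1) F i.+1 *+ 'C(N, i.+1) = \sum_(i < N) F i.+1 *+ 'C(N, i.+1).
  by rewrite big_ord_recr /= bin_small // mulr0n addr0.
have h2 : \sum_(j < N.+1) F j *+ 'C(N, j) = F 0%N + \sum_(i < N) F i.+1 *+ 'C(N, i.+1).
  by rewrite big_ord_recl /= bin0 mulr1n; under eq_bigr => i _ do rewrite bump0n.
rewrite h1 h2 addrA [RHS]addrC; reflexivity.
Qed.

Lemma pascalZ (V : lmodType k) N (F : nat -> V) :
  \sum_(j < N.+2) 'C(N.+1, j)%:R *: F j =
  \sum_(j < N.+1) 'C(N, j)%:R *: F j.+1 + \sum_(j < N.+1) 'C(N, j)%:R *: F j.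
Proof.
under eq_bigr => j _ do rewrite scaler_nat.
under [X in _ = X + _]eq_bigr => j _ do rewrite scaler_nat.
under [X in _ = _ + X]eq_bigr => j _ do rewrite scaler_nat.
exact: pascal.
Qed.

Lemma leibniz (N a b : nat) : iter N (@der k) (Xn a * Xn b) =
  \sum_(j < N.+1) 'C(N, j)%:R *: (Xn (a + j)%N * Xn (b + (N - j))%N).
Proof.
elim: N a b => [|N IH] a b.
  rewrite big_ord1 bin0 scale1r /= addn0 subnn addn0; reflexivity.
erewrite iterSr, derXX, iter_derD, !IH.
rewrite [in RHS](@pascalZ _ N (fun j : nat => Xn (a + j)%N * Xn (b + (N.+1 - j))%N)).
apply: (f_equal2 +%R); apply: eq_bigr => j _.
  have -> : (a.+1 + j = a + j.+1)%N by rewrite addSnnS.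
  have -> : (N.+1 - j.+1 = N - j)%N by rewrite subSS.
  reflexivity.
have -> : (b.+1 + (N - j) = b + (N.+1 - j))%N.
  by rewrite subSn ?addSnnS // -ltnS.
reflexivity.
Qed.

End Der.

Section Ideal.
Local Open Scope ring_scope.
Variable k : fieldType.
Hypothesis char0 : [pchar k] =i pred0.
Local Notation kx := (kx k).
Local Notation Xn a := (<< ucm a >> : kx).
Local Notation I := (@dideal_x2 k).
Implicit Types (p q : kx) (m : cmonom nat).

Lemma I0 : I 0.
Proof. have := dI_scale 0 (@dI_gen k); by rewrite scale0r. Qed.

Lemma IB p q : I p -> I q -> I (p - q).
Proof. move=> hp hq; rewrite -scaleN1r; exact: dI_add hp (dI_scale _ hq). Qed.

Lemma IZ (c : k) p : I p -> I (c *: p).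
Proof. exact: dI_scale. Qed.

Lemma I_sum (J : Type) (r : seq J) (P : pred J) (F : J -> kx) :
  (forall j, P j -> I (F j)) -> I (\sum_(j <- r | P j) F j).
Proof. by move=> h; apply: (big_ind I I0 (@dI_add k)). Qed.

Local Notation Mo m := (<< m >> : kx).

Lemma kplusU m : m != @onecm nat -> kplus (Mo m).
Proof. by move=> h; rewrite /kplus mcoeffU1 (negbTE h). Qed.

Lemma I_mulMo m p : I p -> I (Mo m * p).
Proof.
move=> hp; case: (eqVneq m (@onecm nat)) => [->|h].
  have -> : Mo (@onecm nat) = 1 by [].
  by rewrite mul1r.
exact: dI_mul (kplusU h) hp.
Qed.

Lemma I_mulrMo m p : I p -> I (p * Mo m).
Proof. by move=> hp; rewrite mulrC; apply: I_mulMo. Qed.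


Lemma natk_neq0 (n : nat) : (0 < n)%N -> (n%:R : k) != 0.
Proof.
move=> n0; apply/negP => /(natf0_pchar n0) [p].
by rewrite char0.
Qed.

Lemma I_iter N p : I p -> I (iter N (@der k) p).
Proof. by elim: N => [|N IH] // hp; apply: dI_der; apply: IH. Qed.

Lemma pwX (n t : nat) : Mo (pw n t) = Xn n ^+ t.
Proof.
elim: t => [|t IH]; first reflexivity.
rewrite exprS -IH malgUM; reflexivity.
Qed.

Lemma cntM (B : nat) m1 m2 : cnt B (mulcm m1 m2) = (cnt B m1 + cnt B m2)%N.
Proof. exact: FFM. Qed.

Lemma cntU (B j : nat) : cnt B (ucm j) = (j <= B)%N.
Proof. exact: FFU. Qed.

Lemma alg1 (R : comAlgType k) (c : k) (A S Q D : R) : D = c *: A + S -> c *: (A * Q) = D * Q - S * Q.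
Proof. by move=> ->; rewrite mulrDl addrK scalerAl. Qed.

Lemma alg2 (R : comRingType) (x y : R) (t : nat) : x * x * (x ^+ (2 * t) * y) = x ^+ (2 * t.+1) * y.
Proof. by rewrite mulnS exprD expr2 !mulrA. Qed.

Lemma alg3 (R : comAlgType k) (c : k) (a b x y : R) : (c *: (a * b)) * (x * y) = c *: (x * (y * (a * b))).
Proof. by rewrite -scalerAl; congr (_ *: _); rewrite mulrC mulrA. Qed.

Lemma alg3k (c : k) (a b x y : kx) : (c *: (a * b)) * (x * y) = c *: (x * (y * (a * b))).
Proof. exact: alg3. Qed.

Lemma Ieq (p q : kx) : p = q -> I q -> I p.
Proof. by move->. Qed.

Lemma unscale (V : lmodType k) (c : k) (p : V) : c != 0 -> p = c^-1 *: (c *: p).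
Proof. by move=> c0; rewrite scalerA mulVf // scale1r. Qed.

Lemma I_term (c : k) (x : kx) r (a b : nat) :
  I (c *: (x * Mo (mulcm r (mulcm (ucm a) (ucm b))))) ->
  I (c *: (Xn a * Xn b) * (x * Mo r)).
Proof.
move=> h; apply: (Ieq (alg3k _ _ _ _ _)).
have e2 : Mo r * (Xn a * Xn b) = Mo (mulcm r (mulcm (ucm a) (ucm b))).
  exact: (etrans (congr1 (fun z => Mo r * z) (malgUM _ _ _)) (malgUM _ _ _)).
exact: (Ieq (congr1 (fun z => c *: (x * z)) e2) h).
Qed.

Lemma stepT (B e : nat) (IHB : forall m, (e <= cnt B m)%N -> I (Mo m)) (t : nat) :
  forall r, (e <= cnt B r + t)%N -> I (Xn B.+1 ^+ (2 * t) * Mo r).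
Proof.
elim: t => [|t IHt] r hr.
  rewrite muln0 expr0 mul1r; apply: IHB; by rewrite addn0 in hr.
set n := B.+1.
have hn : (n < (n + n).+1)%N by rewrite ltnS leq_addr.
pose S := \sum_(j < (n + n).+1 | j != Ordinal hn)
     'C(n + n, j)%:R *: (Xn (0 + j)%N * Xn (0 + (n + n - j))%N).
pose c : k := 'C(n + n, n)%:R.
have c0 : c != 0 by apply: natk_neq0; rewrite bin_gt0 leq_addr.
have hDe : iter (n + n) (@der k) (Xn 0 * Xn 0) = c *: (Xn n * Xn n) + S.
  rewrite [in LHS]leibniz [in LHS](bigD1 (Ordinal hn)); last by [].
  have e1 : nat_of_ord (Ordinal hn) = n by [].
  rewrite e1 add0n addnK.
  reflexivity.
have hD : I (iter (n + n) (@der k) (Xn 0 * Xn 0)).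
  apply: I_iter; have := @dI_gen k; rewrite expr2; exact.
set Q := Xn n ^+ (2 * t) * Mo r.
have E := @alg1 _ c _ S Q _ hDe.
apply: (Ieq (esym (alg2 _ _ _))).
apply: (Ieq (unscale _ c0)); apply: IZ.
apply: (Ieq E); apply: IB.
  have hQ : Q = Mo (mulcm (pw n (2 * t)) r).
    exact: (etrans (congr1 (fun z => z * Mo r) (esym (pwX n (2 * t)))) (malgUM _ _ _)).
  apply: (Ieq (congr1 (fun z => iter (n + n) (@der k) (Xn 0 * Xn 0) * z) hQ)).
  exact: I_mulrMo hD.
apply: (Ieq (mulr_suml _ _ _ _)); apply: I_sum => j hj.
rewrite /Q; apply: I_term; apply: IZ; apply: IHt.
have hj1 : (1 <= (j <= B) + (n + n - j <= B))%N.
  have hjn : nat_of_ord j != n by [].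
  have hj2 : (j <= n + n)%N by rewrite -ltnS ltn_ord.
  case: (ltngtP j n) hjn => h // _.
    have h' : (j <= B)%N by exact: h.
    by rewrite h'.
  have h' : (n + n - j <= B)%N.
    move: h hj2; rewrite /n => h hj2; lia.
  by rewrite h' addn1.
rewrite !cntM !cntU !add0n.
move: hj1 hr; case: (j <= B)%N; case: (n + n - j <= B)%N => /=; lia.
Qed.


Lemma Mo_decomp (n t : nat) m : (t <= m n)%N ->
  Mo m = Xn n ^+ t * Mo (divcm m (pw n t)).
Proof.
move=> h.
exact: (etrans (congr1 (fun z => Mo z) (decomp h))
        (etrans (esym (malgUM _ _ _)) (congr1 (fun z => z * Mo (divcm m (pw n t))) (pwX n t)))).
Qed.

Lemma key (B : nat) : forall m, (2 * 3 ^ B <= cnt B m)%N -> I (Mo m).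
Proof.
elim: B => [|B IH] m hm.
  rewrite cnt0 expn0 muln1 in hm.
  apply: (Ieq (Mo_decomp hm)); apply: I_mulrMo; exact: (@dI_gen k).
case: (leqP (2 * 3 ^ B) (cnt B m)) => h; first exact: IH.
rewrite cntS expnS in hm.
have ht : (2 * (2 * 3 ^ B) <= m B.+1)%N by lia.
apply: (Ieq (Mo_decomp ht)); apply: (@stepT B (2 * 3 ^ B) IH).
exact: leq_addl.
Qed.

End Ideal.

Section Good.
Local Open Scope ring_scope.
Variable k : fieldType.
Local Notation kx := (kx k).
Local Notation Mo m := (<< m >> : kx).
Implicit Types (p q : kx) (m : cmonom nat).

Definition wt m := FF (fun i => i) m.

Definition good (N W : nat) p :=
  forall m, m \in msupp p -> (N <= mdeg m)%N /\ (wt m <= W)%N.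

Lemma good0 N W : good N W 0.
Proof. by move=> m; rewrite msupp0 inE. Qed.

Lemma goodD N W p q : good N W p -> good N W q -> good N W (p + q).
Proof.
move=> hp hq m /(fsubsetP (msuppD_le p q)); rewrite in_fsetU => /orP [].
  exact: hp.
exact: hq.
Qed.

Lemma goodZ N W (c : k) p : good N W p -> good N W (c *: p).
Proof. by move=> hp m /(fsubsetP (msuppZ_le c p)); apply: hp. Qed.

Lemma goodMn N W p n : good N W p -> good N W (p *+ n).
Proof. by move=> hp m /(fsubsetP (msuppMn_le p n)); apply: hp. Qed.

Lemma good_natl N W p n : good N W p -> good N W (n%:R * p).
Proof. by move=> hp; rewrite mulr_natl; apply: goodMn. Qed.

Lemma good_sum N W (J : Type) (r : seq J) (P : pred J) (F : J -> kx) :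
  (forall j, P j -> good N W (F j)) -> good N W (\sum_(j <- r | P j) F j).
Proof. by move=> h; apply: (big_ind (good N W) (@good0 N W) (@goodD N W)). Qed.

Lemma good_mono N W N' W' p : (N' <= N)%N -> (W <= W')%N -> good N W p -> good N' W' p.
Proof.
move=> hN hW hp m /hp [h1 h2]; split; first exact: leq_trans hN h1.
exact: leq_trans h2 hW.
Qed.

Lemma goodM N1 W1 N2 W2 p q : good N1 W1 p -> good N2 W2 q -> good (N1 + N2)%N (W1 + W2)%N (p * q).
Proof.
move=> hp hq m /msuppM_le [m1 [m2 [h1 h2 ->]]].
have [a1 b1] := hp _ h1; have [a2 b2] := hq _ h2.
rewrite mdegM /wt.
have -> : FF (fun i => i) (mmul m1 m2) = (FF (fun i => i) m1 + FF (fun i => i) m2)%N by exact: FFM.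
by split; apply: leq_add.
Qed.

Lemma goodU N W m : (N <= mdeg m)%N -> (wt m <= W)%N -> good N W (Mo m).
Proof. move=> h1 h2 m' /(fsubsetP msuppU_le); rewrite inE => /eqP ->; split; [exact: h1 | exact: h2]. Qed.

Lemma decU (i : nat) m : (0 < m i)%N -> m = mulcm (divcm m (ucm i)) (ucm i).
Proof.
move=> h; apply/eqP/cmP => l; rewrite mulcmE divcmE ucmE.
by case: (eqVneq i l) => [<-|]; rewrite ?subn0 ?addn0 // subn1 addn1 prednK.
Qed.

Lemma good_der_monom N W m : (N <= mdeg m)%N -> (wt m <= W)%N -> good N W.+1 (der_monom k m).
Proof.
move=> h1 h2; apply: good_sum => i _.
case: (posnP (m i)) => [mi0|mi].
  rewrite mi0 scale0r; exact: good0.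
apply: goodZ.
have e := decU mi.
rewrite e -FF_deg FFM FFU FF_deg in h1.
rewrite e /wt FFM FFU in h2.
apply: goodU.
  by rewrite -FF_deg FFM FFU FF_deg.
by rewrite /wt FFM FFU addnS ltnS.
Qed.

Lemma good_der N W p : good N W p -> good N W.+1 (der p).
Proof.
move=> hp; rewrite /der; apply: good_sum => m _.
case: (boolP (m \in msupp p)) => hm.
  have [h1 h2] := hp m hm; apply: goodZ; exact: good_der_monom.
rewrite (mcoeff_outdom hm) scale0r; exact: good0.
Qed.

Lemma good_iter N W l p : good N W p -> good N (W + l)%N (iter l (@der k) p).
Proof.
elim: l => [|l IH] hp; first by rewrite addn0.
rewrite addnS; apply: good_der; exact: IH.
Qed.

End Good.

Lemma natl_assoc (R : comRingType) (n : nat) (a b : R) : n%:R * a * b = a * b *+ n.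
Proof. by rewrite -mulrA mulr_natl. Qed.

Section Main.
Local Open Scope ring_scope.
Variable k : fieldType.
Hypothesis char0 : [pchar k] =i pred0.
Local Notation kx := (kx k).
Local Notation Mo m := (<< m >> : kx).
Implicit Types (p q : kx) (m : cmonom nat).

Lemma goodE N W p q : p = q -> good N W q -> good N W p.
Proof. by move->. Qed.

Lemma good_nth_mkseq N W (f : nat -> kx) n i :
  (forall j, good N W (f j)) -> good N W (nth 0 (mkseq f n) i).
Proof.
move=> h; case: (ltnP i n) => hi; first by rewrite nth_mkseq.
rewrite nth_default ?size_mkseq //; exact: good0.
Qed.

Lemma good_opmul (P Q : seq kx) w N W :
  (forall i, good 1%N w (nth 0 P i)) -> (forall i, good N W (nth 0 Q i)) ->
  forall i, good N.+1 (w + W + size P)%N (nth 0 (opmul P Q) i).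
Proof.
move=> hP hQ i; rewrite /opmul; apply: good_nth_mkseq => n.
rewrite /opmul_coef; apply: good_sum => a _; apply: good_sum => b _; apply: good_sum => l _.
apply: (goodE (natl_assoc _ _ _)); apply: goodMn.
have h := goodM (hP a) (good_iter (l:=l) (hQ b)).
apply: (good_mono _ _ h) => //.
rewrite addnA leq_add2l; apply: ltnW; apply: (leq_trans (ltn_ord l)).
exact: ltn_ord.
Qed.


Lemma cnt_split (B : nat) m :
  (cnt B m + FF (fun i => nat_of_bool (B < i)%N) m)%N = mdeg m.
Proof.
rewrite /cnt -FFD -FF_deg; apply: eq_bigr => i _; congr (_ * _)%N.
by case: leqP.
Qed.

Lemma wt_large (B : nat) m :
  (B.+1 * FF (fun i => nat_of_bool (B < i)%N) m <= wt m)%N.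
Proof.
rewrite -FFZ /wt; apply: FF_le => i.
by case: ltnP => h; rewrite ?muln0 ?muln1.
Qed.

Lemma arith (c n d C L E : nat) : n = (2 * E)%N -> (n.+1 <= d)%N -> d = (C + L)%N ->
  ((2 * c).+1 * L <= n.+1 * c)%N -> (E <= C)%N.
Proof.
move=> hn hd hdC hw.
have h2 : (n.+1 * c <= d * c)%N by rewrite leq_mul2r hd orbT.
nia.
Qed.

Lemma final_I (c : nat) p :
  let n := (2 * (2 * 3 ^ (2 * c)))%N in
  good n.+1 (n.+1 * c)%N p -> dideal_x2 p.
Proof.
move=> n hp.
apply: (Ieq (monalgE p)); rewrite big_seq; apply: I_sum => m hm.
rewrite malgUZ; apply: IZ; apply: (@key k char0 (2 * c)%N).
have [h1 h2] := hp m hm.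
have hs := cnt_split (2 * c) m.
have hl := wt_large (2 * c) m.
apply: (@arith c n (mdeg m) _ (FF (fun i => nat_of_bool (2 * c < i)%N) m)) => //.
exact: leq_trans hl h2.
Qed.


Definition wP (P : seq kx) := (\sum_(i < size P) \sum_(m <- msupp (nth 0%R P i)) wt m)%N.

Lemma good_base (P : seq kx) (HP : op_rep P) :
  forall i, good 1%N (wP P) (nth 0 P i).
Proof.
move=> i m hm; split.
  rewrite lt0n mdeg_eq0; apply/negP => /eqP em.
  have := HP i; rewrite /kplus => h0.
  by move: hm; rewrite -mcoeff_neq0 em h0 eqxx.
case: (ltnP i (size P)) => hi; last first.
  by move: hm; rewrite nth_default // msupp0 inE.
rewrite /wP (bigD1 (Ordinal hi)) //=.
apply: leq_trans (leq_addr _ _).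
by rewrite (big_fsetD1 m hm) /= leq_addr.
Qed.

Lemma invariant (P : seq kx) (HP : op_rep P) :
  forall n i, good n.+1 (n.+1 * (wP P + size P))%N (nth 0 (oppowS P n) i).
Proof.
move=> n; elim: n => [|n IH] i.
  apply: (good_mono _ _ (@good_base P HP i)) => //.
  by rewrite mul1n leq_addr.
have h := @good_opmul P (oppowS P n) _ _ _ (@good_base P HP) IH i.
apply: (good_mono _ _ h) => //.
rewrite [X in (_ <= X)%N]mulSn; lia.
Qed.

End Main.

Local Open Scope ring_scope.
Unset Implicit Arguments.
Set Strict Implicit.

Theorem mainTheorem7 (k : fieldType) (char0 : [pchar k] =i pred0)
    (P : seq (kx k)) (HP : op_rep P) :
  exists n : nat, op_zero (oppowS P n).
Proof.
set c := (wP P + size P)%N.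
exists (2 * (2 * 3 ^ (2 * c)))%N => i.
apply: (@final_I k char0 c).
exact: (invariant HP).
Qed.
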